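(* For all integers $i\ge1$ and $0\le j<i$ there is a constant $C$ (independent of $n$ and of the sequences) such that for every $n$ and every pair of sequences $\eta,\dot\eta$ as below, $\lVert\eta\rVert^2_{i-j,i}\le Ce_{i+j-1}$, $\lVert\dot\eta\rVert^2_{i-j,i}\le Ce_{i+j}$, $\lvert\eta\rvert^2_{\infty;i-j,i}\le Ce_{i+j}$, $\lvert\dot\eta\rvert^2_{\infty;i-j,i}\le Ce_{i+j+1}$, and $\lvert\dot\eta\rvert^2_{\infty;1/2,i}\le Ce_{2i+1}$.
   Context: Fix $n$. $\eta_k,\dot\eta_k\in\mathbb{R}^d$ for $1\le k\le n+1$ with $\eta_{n+1}=\dot\eta_{n+1}=0$, extended for $k>n+1$ by $\eta_k=-\eta_{2n+2-k}$, $\dot\eta_k=-\dot\eta_{2n+2-k}$. $(\nabla_+f)_k=n(f_{k+1}-f_k)$; $s_k^{(r)}=\frac{\Gamma(k+r)}{n^r\Gamma(k)}$. Seminorms: $\lVert\eta\rVert^2_{r,m}=\frac1n\sum_{k=1}^{n-m+1}s_k^{(r)}\lvert(\nabla_+^m\eta)_k\rvert^2$, $\lvert\eta\rvert^2_{\infty;r,m}=\max_{1\le k\le n-m+1}s_k^{(r)}\lvert(\nabla_+^m\eta)_k\rvert^2$, same for $\dot\eta$. Energy: $e_m=\frac1n\sum_{\ell=0}^m\sum_{k=1}^{n-\lfloor\ell/2\rfloor}\big(s_k^{(\ell)}\lvert(\nabla_+^\ell\dot\eta)_k\rvert^2+s_k^{(\ell+1)}\lvert(\nabla_+^{\ell+1}\eta)_k\rvert^2\big)$.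 *)

(* Defs.v *)
From Stdlib Require Import Reals Lra Lia Arith.
Open Scope R_scope.

(* rsum f lo hi = sum_{k=lo}^{hi} f k  (empty if hi < lo) *)
Fixpoint rsum_cnt (f : nat -> R) (lo cnt : nat) : R :=
  match cnt with
  | O => 0
  | S c => rsum_cnt f lo c + f (lo + c)%nat
  end.
Definition rsum (f : nat -> R) (lo hi : nat) : R := rsum_cnt f lo (S hi - lo).

(* rmax f lo hi = max_{lo<=k<=hi} f k  (0 if empty; used only on nonnegative f) *)
Fixpoint rmax_cnt (f : nat -> R) (lo cnt : nat) : R :=
  match cnt with
  | O => 0
  | S c => Rmax (rmax_cnt f lo c) (f (lo + c)%nat)
  end.
Definition rmax (f : nat -> R) (lo hi : nat) : R := rmax_cnt f lo (S hi - lo).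

(* A sequence of vectors in R^d: seqv k c = c-th coordinate (c < d) of the k-th term. *)
Definition seqv := nat -> nat -> R.

Definition vnorm2 (d : nat) (v : nat -> R) : R :=
  match d with O => 0 | S d' => rsum (fun c => v c ^ 2) 0 d' end.

(* Odd reflection extension about n+1: eta_k = - eta_{2n+2-k} for n+1 < k <= 2n+1.
   Beyond 2n+1 the paper's extension is undefined; we put 0 there. *)
Definition ext (n : nat) (eta : seqv) : seqv := fun k c =>
  if (k <=? n + 1)%nat then eta k c
  else if (k <=? 2 * n + 1)%nat then - eta (2 * n + 2 - k)%nat c
  else 0.

Definition nabla (n : nat) (f : seqv) : seqv := fun k c => INR n * (f (S k) c - f k c).
Definition nablap (n m : nat) (f : seqv) : seqv := Nat.iter m (nabla n) f.

(* rising product k (k+1) ... (k+r-1) = Gamma(k+r)/Gamma(k) *)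
Fixpoint rising (k r : nat) : R :=
  match r with O => 1 | S r' => rising k r' * INR (k + r') end.

(* s_k^{(r)} = Gamma(k+r) / (n^r Gamma(k)), integer r *)
Definition s (n r k : nat) : R := rising k r / INR n ^ r.

(* s_k^{(1/2)} = Gamma(k+1/2) / (n^{1/2} Gamma(k)),
   with Gamma(k+1/2) = sqrt(PI) * prod_{t=0}^{k-1} (t + 1/2), Gamma(k) = (k-1)! *)
Fixpoint half_rising (k : nat) : R :=
  match k with O => 1 | S k' => half_rising k' * (INR k' + / 2) end.
Definition s_half (n k : nat) : R :=
  sqrt PI * half_rising k / INR (fact (k - 1)) / sqrt (INR n).

Definition snorm2 (n d : nat) (w : nat -> R) (m : nat) (f : seqv) : R :=
  / INR n * rsum (fun k => w k * vnorm2 d (nablap n m (ext n f) k)) 1 (n + 1 - m).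
Definition snorminf2 (n d : nat) (w : nat -> R) (m : nat) (f : seqv) : R :=
  rmax (fun k => w k * vnorm2 d (nablap n m (ext n f) k)) 1 (n + 1 - m).

Definition energy (n d m : nat) (eta deta : seqv) : R :=
  / INR n * rsum (fun l =>
     rsum (fun k =>
        s n l k * vnorm2 d (nablap n l (ext n deta) k)
      + s n (S l) k * vnorm2 d (nablap n (S l) (ext n eta) k))
      1 (n - Nat.div2 l)) 0 m.

(* Main.v *)
Require Import Defs.
From Stdlib Require Import Reals Lra Lia Arith Psatz.
Open Scope R_scope.

Lemma rc_ext f g lo L : (forall k, (lo <= k < lo + L)%nat -> f k = g k) ->
  rsum_cnt f lo L = rsum_cnt g lo L.
Proof. induction L; simpl; intros H; [reflexivity|].
  rewrite IHL by (intros; apply H; lia). rewrite H by lia. reflexivity. Qed.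

Lemma rc_le f g lo L : (forall k, (lo <= k < lo + L)%nat -> f k <= g k) ->
  rsum_cnt f lo L <= rsum_cnt g lo L.
Proof. induction L; simpl; intros H; [lra|].
  assert (H1 := H (lo + L)%nat ltac:(lia)).
  assert (H2 : rsum_cnt f lo L <= rsum_cnt g lo L) by (apply IHL; intros; apply H; lia). lra. Qed.

Lemma rc_nonneg f lo L : (forall k, (lo <= k < lo + L)%nat -> 0 <= f k) -> 0 <= rsum_cnt f lo L.
Proof. induction L; simpl; intros H; [lra|].
  assert (H1 := H (lo + L)%nat ltac:(lia)).
  assert (H2 : 0 <= rsum_cnt f lo L) by (apply IHL; intros; apply H; lia). lra. Qed.

Lemma rc_scal a f lo L : rsum_cnt (fun k => a * f k) lo L = a * rsum_cnt f lo L.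
Proof. induction L; simpl; [ring|]. rewrite IHL; ring. Qed.

Lemma rc_plus f g lo L : rsum_cnt (fun k => f k + g k) lo L = rsum_cnt f lo L + rsum_cnt g lo L.
Proof. induction L; simpl; [ring|]. rewrite IHL; ring. Qed.

Lemma rc_app f lo L1 L2 : rsum_cnt f lo (L1 + L2) = rsum_cnt f lo L1 + rsum_cnt f (lo + L1) L2.
Proof. induction L2; simpl.
  - rewrite Nat.add_0_r; ring.
  - rewrite Nat.add_succ_r; simpl. rewrite IHL2. replace (lo + (L1 + L2))%nat with (lo + L1 + L2)%nat by lia. ring. Qed.

Lemma rc_shift f lo L : rsum_cnt (fun k => f (S k)) lo L = rsum_cnt f (S lo) L.
Proof. induction L; simpl; [reflexivity|]. rewrite IHL. reflexivity. Qed.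

Lemma rc_cons f lo L : rsum_cnt f lo (S L) = f lo + rsum_cnt f (S lo) L.
Proof. change (S L) with (1 + L)%nat. rewrite rc_app. simpl. rewrite Nat.add_0_r, Nat.add_1_r. ring. Qed.

Lemma rc_sub f lo1 L1 lo2 L2 : (lo2 <= lo1)%nat -> (lo1 + L1 <= lo2 + L2)%nat ->
  (forall k, (lo2 <= k < lo2 + L2)%nat -> 0 <= f k) ->
  rsum_cnt f lo1 L1 <= rsum_cnt f lo2 L2.
Proof. intros H1 H2 H.
  replace L2 with ((lo1 - lo2) + (L1 + (L2 - (lo1 - lo2) - L1)))%nat by lia.
  rewrite rc_app, rc_app. replace (lo2 + (lo1 - lo2))%nat with lo1 by lia.
  assert (0 <= rsum_cnt f lo2 (lo1 - lo2)) by (apply rc_nonneg; intros; apply H; lia).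
  assert (0 <= rsum_cnt f (lo1 + L1) (L2 - (lo1 - lo2) - L1)) by (apply rc_nonneg; intros; apply H; lia).
  lra. Qed.

Lemma rc_term f lo L k : (lo <= k < lo + L)%nat ->
  (forall k, (lo <= k < lo + L)%nat -> 0 <= f k) -> f k <= rsum_cnt f lo L.
Proof. intros Hk H. assert (E : rsum_cnt f k 1 = f k) by (simpl; rewrite Nat.add_0_r; ring).
  rewrite <- E. apply rc_sub; auto; lia. Qed.

Lemma tele_up (x y z : nat -> R) lo L :
  (forall m, (lo <= m < lo + L)%nat -> x m + y m <= x (S m) + z m) ->
  x lo + rsum_cnt y lo L <= x (lo + L)%nat + rsum_cnt z lo L.
Proof. induction L; simpl; intros H.
  - rewrite Nat.add_0_r; lra.
  - assert (IH := IHL (fun m Hm => H m ltac:(lia))). assert (H1 := H (lo+L)%nat ltac:(lia)).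
    replace (lo + S L)%nat with (S (lo+L)) by lia. lra. Qed.

Lemma tele_down (x z : nat -> R) lo L :
  (forall m, (lo <= m < lo + L)%nat -> x (S m) <= x m + z m) ->
  x (lo + L)%nat <= x lo + rsum_cnt z lo L.
Proof. induction L; simpl; intros H.
  - rewrite Nat.add_0_r; lra.
  - assert (IH := IHL (fun m Hm => H m ltac:(lia))). assert (H1 := H (lo+L)%nat ltac:(lia)).
    replace (lo + S L)%nat with (S (lo+L)) by lia. lra. Qed.

Lemma pigeon f lo c : (1 <= c)%nat -> exists K, (lo <= K < lo + c)%nat /\ INR c * f K <= rsum_cnt f lo c.
Proof. intros Hc. destruct c as [|c]; [lia|]. clear Hc. induction c.
  - exists lo. split; [lia|]. simpl. rewrite Nat.add_0_r. lra.
  - destruct IHc as [K [HK HfK]].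
    destruct (Rle_dec (INR (S (S c)) * f (lo + S c)%nat) (rsum_cnt f lo (S (S c)))) as [h|h].
    + exists (lo + S c)%nat. split; [lia|exact h].
    + exists K. split; [lia|]. apply Rnot_le_lt in h.
      change (rsum_cnt f lo (S (S c))) with (rsum_cnt f lo (S c) + f (lo + S c)%nat) in *.
      rewrite !S_INR in *.
      assert (0 <= INR c) by apply pos_INR. nra. Qed.

Lemma rmax_le f lo L B : 0 <= B -> (forall k, (lo <= k < lo + L)%nat -> f k <= B) -> rmax_cnt f lo L <= B.
Proof. intros HB. induction L; simpl; intros H; [lra|].
  apply Rmax_lub; [apply IHL; intros; apply H; lia| apply H; lia]. Qed.

Lemma vn_eq d v : vnorm2 d v = rsum_cnt (fun c => v c ^ 2) 0 d.
Proof. destruct d; reflexivity. Qed.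

Lemma vn_nonneg d v : 0 <= vnorm2 d v.
Proof. rewrite vn_eq. apply rc_nonneg. intros. apply pow2_ge_0. Qed.

Lemma vn_ext d u v : (forall c, u c = v c) -> vnorm2 d u = vnorm2 d v.
Proof. intros H. rewrite !vn_eq. apply rc_ext. intros. rewrite H. reflexivity. Qed.

Lemma vn_scal d a v : vnorm2 d (fun c => a * v c) = a ^ 2 * vnorm2 d v.
Proof. rewrite !vn_eq, <- rc_scal. apply rc_ext. intros. ring. Qed.

Lemma sq_tri t u v : 0 < t -> u ^ 2 <= (1 + t) * v ^ 2 + (1 + / t) * (u - v) ^ 2.
Proof. intros Ht.
  assert (E : (1 + t) * v ^ 2 + (1 + / t) * (u - v) ^ 2 - u ^ 2 = (t * v - (u - v)) ^ 2 * / t)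
    by (field; lra).
  assert (0 <= (t * v - (u - v)) ^ 2 * / t).
  { apply Rmult_le_pos; [apply pow2_ge_0| left; apply Rinv_0_lt_compat; lra]. }
  lra. Qed.

Lemma vn_tri d t u v : 0 < t ->
  vnorm2 d u <= (1 + t) * vnorm2 d v + (1 + / t) * vnorm2 d (fun c => u c - v c).
Proof. intros Ht. rewrite !vn_eq, <- !rc_scal, <- rc_plus. apply rc_le. intros. apply sq_tri; auto. Qed.

Lemma INRn_pos n : (1 <= n)%nat -> 0 < INR n.
Proof. intros. apply lt_0_INR. lia. Qed.

Lemma vn_diff_up n d (g : seqv) k : (1 <= n)%nat ->
  vnorm2 d (fun c => g k c - g (S k) c) = (/ INR n) ^ 2 * vnorm2 d (nabla n g k).
Proof. intros Hn. assert (H := INRn_pos n Hn).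
  replace ((/ INR n) ^ 2) with ((- / INR n) ^ 2) by ring.
  rewrite <- vn_scal. apply vn_ext. intros c. unfold nabla. field. lra. Qed.

Lemma vn_diff_down n d (g : seqv) k : (1 <= n)%nat ->
  vnorm2 d (fun c => g (S k) c - g k c) = (/ INR n) ^ 2 * vnorm2 d (nabla n g k).
Proof. intros Hn. assert (H := INRn_pos n Hn).
  rewrite <- vn_scal. apply vn_ext. intros c. unfold nabla. field. lra. Qed.

Lemma up_step n d (g : seqv) k t : (1 <= n)%nat -> 0 < t ->
  vnorm2 d (g k) <= (1 + t) * vnorm2 d (g (S k)) + (1 + / t) * ((/ INR n) ^ 2 * vnorm2 d (nabla n g k)).
Proof. intros Hn Ht. rewrite <- vn_diff_up by auto. apply vn_tri; auto. Qed.

Lemma down_step n d (g : seqv) k t : (1 <= n)%nat -> 0 < t ->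
  vnorm2 d (g (S k)) <= (1 + t) * vnorm2 d (g k) + (1 + / t) * ((/ INR n) ^ 2 * vnorm2 d (nabla n g k)).
Proof. intros Hn Ht. rewrite <- vn_diff_down by auto. apply vn_tri; auto. Qed.

Lemma rising_nonneg k r : 0 <= rising k r.
Proof. induction r; cbn [rising pow]; [lra|]. apply Rmult_le_pos; auto. apply pos_INR. Qed.

Lemma rising_pos k r : (1 <= k)%nat -> 0 < rising k r.
Proof. intros Hk. induction r; cbn [rising pow]; [lra|]. apply Rmult_lt_0_compat; auto. apply lt_0_INR; lia. Qed.

Lemma rising_shift k r : rising k (S r) = INR k * rising (S k) r.
Proof. induction r.
  - cbn [rising]. rewrite Nat.add_0_r. ring.
  - change (rising k (S (S r))) with (rising k (S r) * INR (k + S r)).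
    rewrite IHr. cbn [rising]. replace (k + S r)%nat with (S k + r)%nat by lia. ring. Qed.

Lemma rising_mono k r : rising k r <= rising (S k) r.
Proof. induction r; cbn [rising pow]; [lra|]. apply Rmult_le_compat; auto using rising_nonneg, pos_INR.
  apply le_INR; lia. Qed.

Lemma rising_lower k r : INR k ^ r <= rising k r.
Proof. induction r; cbn [rising pow]; [lra|]. rewrite Rmult_comm. apply Rmult_le_compat; auto.
  apply pow_le, pos_INR. apply pos_INR. apply le_INR; lia. Qed.

Lemma rising_upper k r : rising k r <= (INR k + INR r) ^ r.
Proof. induction r; cbn [rising pow]; [lra|]. rewrite Rmult_comm.
  assert (0 <= INR k) by apply pos_INR. assert (0 <= INR r) by apply pos_INR.
  assert (E : INR (k + r) = INR k + INR r) by apply plus_INR. rewrite S_INR.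
  assert (H1 : (INR k + INR r) ^ r <= (INR k + (INR r + 1)) ^ r) by (apply pow_incr; lra).
  assert (0 <= rising k r) by apply rising_nonneg.
  apply Rmult_le_compat; lra. Qed.

Lemma s_nonneg n r k : (1 <= n)%nat -> 0 <= s n r k.
Proof. intros Hn. unfold s. apply Rmult_le_pos. apply rising_nonneg.
  left. apply Rinv_0_lt_compat, pow_lt, INRn_pos; auto. Qed.

Lemma top_cmp n r q P k : (1 <= n)%nat -> (1 <= k)%nat -> (k <= n + 1)%nat -> (n <= 4 * P * k)%nat ->
  s n r k <= (2 + INR r) ^ r * (4 * INR P) ^ q * s n q k.
Proof. intros Hn Hk1 Hk2 HP. assert (Hn' := INRn_pos n Hn).
  assert (A : s n r k <= (2 + INR r) ^ r).
  { unfold s. apply Rle_trans with ((INR k + INR r) ^ r / INR n ^ r).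
    - unfold Rdiv. apply Rmult_le_compat_r. left; apply Rinv_0_lt_compat, pow_lt; auto. apply rising_upper.
    - unfold Rdiv. rewrite <- pow_inv. rewrite <- Rpow_mult_distr. apply pow_incr. split.
      + apply Rmult_le_pos. rewrite <- plus_INR; apply pos_INR. left; apply Rinv_0_lt_compat; auto.
      + apply Rmult_le_reg_r with (INR n); auto. rewrite Rmult_assoc, Rinv_l, Rmult_1_r by lra.
        assert (INR k <= INR n + 1) by (rewrite <- S_INR; apply le_INR; lia).
        assert (1 <= INR n) by (apply (le_INR 1); lia). assert (0 <= INR r) by apply pos_INR. nra. }
  assert (B : 1 <= (4 * INR P) ^ q * s n q k).
  { unfold s. apply Rle_trans with ((4 * INR P) ^ q * (INR k ^ q / INR n ^ q)).
    - unfold Rdiv. rewrite <- pow_inv. rewrite <- !Rpow_mult_distr. rewrite <- (pow1 q).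
      apply pow_incr. split; [lra|]. apply Rmult_le_reg_r with (INR n); auto.
      replace (4 * INR P * (INR k * / INR n) * INR n) with (4 * INR P * INR k) by (field; lra).
      rewrite Rmult_1_l. replace (4 * INR P * INR k) with (INR (4 * P * k)) by (rewrite !mult_INR; simpl; ring).
      apply le_INR; auto.
    - apply Rmult_le_compat_l. apply pow_le. assert (0 <= INR P) by apply pos_INR; lra.
      unfold Rdiv. apply Rmult_le_compat_r. left; apply Rinv_0_lt_compat, pow_lt; auto. apply rising_lower. }
  assert (0 <= (2 + INR r) ^ r) by (apply pow_le; assert (0 <= INR r) by apply pos_INR; lra).
  nra. Qed.

Lemma alg_hardy a b cG R1 P nn mm rr : 0 < R1 -> 0 < P -> 0 < nn -> 1 <= mm -> 0 <= rr ->
  0 <= b -> 0 <= cG ->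
  a <= (1 + (rr+1)/(2*mm)) * b + (1 + /((rr+1)/(2*mm))) * ((/nn)^2 * cG) ->
  nn*(mm*R1/(nn*P))*a + (rr+1)/2*(R1/P)*b <=
  nn*(R1*(mm+1+rr)/(nn*P))*b + 2*(mm*R1*(mm+1+rr)/(nn*(nn*P)))*cG.
Proof. intros HR HP Hn Hm Hr Hb Hc H.
  set (X := (/nn)^2 * cG).
  assert (HX : 0 <= X) by (unfold X; apply Rmult_le_pos; [apply pow2_ge_0|auto]).
  assert (E1 : /((rr+1)/(2*mm)) = 2*mm/(rr+1)) by (field; lra).
  rewrite E1 in H.
  assert (E2 : nn*(mm*R1/(nn*P))*a + (rr+1)/2*(R1/P)*b = (R1/P) * (mm*a + (rr+1)/2*b)) by (field; lra).
  assert (E3 : nn*(R1*(mm+1+rr)/(nn*P))*b + 2*(mm*R1*(mm+1+rr)/(nn*(nn*P)))*cG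
     = (R1/P) * ((mm+1+rr)*b + 2*mm*(mm+1+rr)*X)) by (unfold X; field; lra).
  rewrite E2, E3. apply Rmult_le_compat_l.
  { unfold Rdiv; apply Rmult_le_pos; [lra|left; apply Rinv_0_lt_compat; lra]. }
  assert (H' : mm * a <= mm * ((1 + (rr+1)/(2*mm)) * b + (1 + 2*mm/(rr+1)) * X)) by (apply Rmult_le_compat_l; [lra|exact H]).
  assert (E4 : mm * ((1 + (rr+1)/(2*mm)) * b + (1 + 2*mm/(rr+1)) * X) =
     (mm + (rr+1)/2) * b + (mm + 2*mm*mm/(rr+1)) * X) by (field; lra).
  rewrite E4 in H'.
  assert (H5 : 2*mm*mm/(rr+1) <= 2*mm*mm).
  { assert (Hi : / (rr+1) <= 1) by (rewrite <- Rinv_1; apply Rinv_le_contravar; lra).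
    assert (0 < /(rr+1)) by (apply Rinv_0_lt_compat; lra).
    unfold Rdiv. nra. }
  assert (H6 : (mm + 2*mm*mm/(rr+1)) * X <= 2*mm*(mm+1+rr) * X) by (apply Rmult_le_compat_r; nra).
  nra. Qed.

Lemma hardy_step n d (g : seqv) r m : (1 <= n)%nat -> (1 <= m)%nat ->
  INR n * s n (S r) m * vnorm2 d (g m) + (INR r + 1) / 2 * s n r (S m) * vnorm2 d (g (S m)) <=
  INR n * s n (S r) (S m) * vnorm2 d (g (S m)) + 2 * s n (S (S r)) m * vnorm2 d (nabla n g m).
Proof. intros Hn Hm.
  assert (Hmm : 1 <= INR m) by (apply (le_INR 1); lia).
  assert (Hr : 0 <= INR r) by apply pos_INR.
  assert (Ht : 0 < (INR r + 1) / (2 * INR m)) by (apply Rdiv_lt_0_compat; lra).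
  assert (H := up_step n d g m _ Hn Ht).
  unfold s. cbn [pow].
  replace (rising m (S (S r))) with (rising m (S r) * INR (m + S r)) by reflexivity.
  rewrite rising_shift.
  replace (rising (S m) (S r)) with (rising (S m) r * INR (S m + r)) by reflexivity.
  replace (INR (m + S r)) with (INR m + 1 + INR r) by (rewrite plus_INR, S_INR; ring).
  replace (INR (S m + r)) with (INR m + 1 + INR r) by (rewrite plus_INR, S_INR; ring).
  replace (INR m * rising (S m) r * (INR m + 1 + INR r)) with (INR m * (rising (S m) r) * (INR m + 1 + INR r)) by ring.
  apply alg_hardy; auto using vn_nonneg.
  - apply rising_pos; lia.
  - apply pow_lt, INRn_pos; auto.
  - apply INRn_pos; auto.
Qed.

Lemma hardy_int n d (g : seqv) r K : (1 <= n)%nat -> (1 <= K)%nat ->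
  (INR r + 1) / 2 * rsum_cnt (fun k => s n r k * vnorm2 d (g k)) 1 K <=
  INR n * s n (S r) K * vnorm2 d (g K) + 2 * rsum_cnt (fun k => s n (S (S r)) k * vnorm2 d (nabla n g k)) 1 (K - 1).
Proof. intros Hn HK.
  assert (T := tele_up (fun m => INR n * s n (S r) m * vnorm2 d (g m))
     (fun m => (INR r + 1) / 2 * s n r (S m) * vnorm2 d (g (S m)))
     (fun m => 2 * s n (S (S r)) m * vnorm2 d (nabla n g m)) 1 (K - 1)
     (fun m Hm => hardy_step n d g r m Hn ltac:(lia))).
  replace (1 + (K - 1))%nat with K in T by lia.
  rewrite <- rc_scal. 
  replace K with (S (K - 1)) at 1 by lia. rewrite rc_cons, <- rc_shift.
  assert (E1 : rsum_cnt (fun m => (INR r + 1) / 2 * s n r (S m) * vnorm2 d (g (S m))) 1 (K - 1)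
     = rsum_cnt (fun k => (INR r + 1) / 2 * (s n r (S k) * vnorm2 d (g (S k)))) 1 (K - 1))
    by (apply rc_ext; intros; ring).
  assert (E2 : rsum_cnt (fun m => 2 * s n (S (S r)) m * vnorm2 d (nabla n g m)) 1 (K - 1)
     = 2 * rsum_cnt (fun k => s n (S (S r)) k * vnorm2 d (nabla n g k)) 1 (K - 1))
    by (rewrite <- rc_scal; apply rc_ext; intros; ring).
  rewrite E1, E2 in T.
  assert (X1 : (INR r + 1) / 2 * (s n r 1 * vnorm2 d (g 1%nat)) <= INR n * s n (S r) 1 * vnorm2 d (g 1%nat)).
  { assert (E : INR n * s n (S r) 1 = (INR r + 1) * s n r 1).
    { unfold s. cbn [pow rising]. rewrite plus_INR. simpl (INR 1). assert (0 < INR n) by (apply INRn_pos; auto).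
      assert (0 < INR n ^ r) by (apply pow_lt; auto). field. split; lra. }
    rewrite E. assert (0 <= s n r 1) by (apply s_nonneg; auto). assert (0 <= vnorm2 d (g 1%nat)) by apply vn_nonneg.
    assert (0 <= INR r) by apply pos_INR.
    assert (0 <= s n r 1 * vnorm2 d (g 1%nat)) by (apply Rmult_le_pos; auto).
    replace ((INR r + 1) * s n r 1 * vnorm2 d (g 1%nat)) with ((INR r + 1) * (s n r 1 * vnorm2 d (g 1%nat))) by ring.
    nra. }
  lra. Qed.

Definition Q n d (F : seqv) p r := / INR n * rsum_cnt (fun k => s n r k * vnorm2 d (nablap n p F k)) 1 (n + 1 - p).

Lemma Q_nonneg n d F p r : (1 <= n)%nat -> 0 <= Q n d F p r.
Proof. intros Hn. unfold Q. apply Rmult_le_pos.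
  left; apply Rinv_0_lt_compat, INRn_pos; auto.
  apply rc_nonneg; intros; apply Rmult_le_pos; [apply s_nonneg; auto|apply vn_nonneg]. Qed.

Lemma Q_eq n d F p r : (1 <= n)%nat ->
  rsum_cnt (fun k => s n r k * vnorm2 d (nablap n p F k)) 1 (n + 1 - p) = INR n * Q n d F p r.
Proof. intros Hn. unfold Q. assert (0 < INR n) by (apply INRn_pos; auto). field. lra. Qed.

Lemma nat_facts n p : (1 <= p)%nat -> (p <= n)%nat ->
  (n <= 4 * p * ((n+1-p) - (n+1-p)/2))%nat /\ ((n+1-p) - (n+1-p)/2 <= S ((n+1-p)/2))%nat
  /\ (1 <= (n+1-p) - (n+1-p)/2)%nat /\ (S ((n+1-p)/2) + ((n+1-p) - (n+1-p)/2) = S (n+1-p))%nat.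
Proof.
intros. set (K1 := (n+1-p)%nat). assert (H1 := Nat.div_mod K1 2 ltac:(lia)).
assert (H2 : (K1 mod 2 < 2)%nat) by (apply Nat.mod_upper_bound; lia).
set (h := (K1/2)%nat) in *. set (m := (K1 mod 2)%nat) in *. assert (K1 + p = n + 1)%nat by (unfold K1; lia).
split; [|lia]. nia. Qed.

Lemma pick_top n d F p : (1 <= n)%nat -> (1 <= p)%nat -> (p <= n)%nat ->
  exists K, (1 <= K)%nat /\ (K <= n + 1 - p)%nat /\ (n <= 4 * p * K)%nat /\
    s n p K * vnorm2 d (nablap n p F K) <= 4 * INR p * Q n d F p p.
Proof. intros Hn Hp Hpn. destruct (nat_facts n p Hp Hpn) as [F1 [F2 [F3 F4]]].
  set (K1 := (n+1-p)%nat) in *. set (c := (K1 - K1/2)%nat) in *. set (K0 := S (K1/2)) in *.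
  set (f := fun k => s n p k * vnorm2 d (nablap n p F k)).
  destruct (pigeon f K0 c F3) as [K [HK HfK]].
  assert (Hsub : rsum_cnt f K0 c <= rsum_cnt f 1 K1).
  { apply rc_sub; try lia. intros; unfold f; apply Rmult_le_pos; [apply s_nonneg; auto|apply vn_nonneg]. }
  assert (HQ := Q_eq n d F p p Hn). fold K1 in HQ. fold f in HQ.
  exists K. split; [lia|]. split; [lia|]. split; [nia|].
  fold (f K).
  assert (Hf0 : 0 <= f K) by (unfold f; apply Rmult_le_pos; [apply s_nonneg; auto|apply vn_nonneg]).
  assert (Hnc : INR n <= 4 * INR p * INR c).
  { replace (4 * INR p * INR c) with (INR (4 * p * c)) by (rewrite !mult_INR; simpl; ring). apply le_INR; auto. }
  assert (Hnpos := INRn_pos n Hn).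
  assert (f K * INR n <= 4 * INR p * (INR n * Q n d F p p)).
  { apply Rle_trans with (f K * (4 * INR p * INR c)). apply Rmult_le_compat_l; auto.
    assert (INR c * f K <= INR n * Q n d F p p) by lra.
    assert (0 <= INR p) by apply pos_INR. nra. }
  apply Rmult_le_reg_r with (INR n); auto. nra. Qed.

Lemma sum_nabla_le n d F p r K : (1 <= n)%nat -> (K <= n - p)%nat ->
  rsum_cnt (fun k => s n r k * vnorm2 d (nabla n (nablap n p F) k)) 1 K <= INR n * Q n d F (S p) r.
Proof. intros Hn HK. rewrite <- Q_eq by auto. replace (n + 1 - S p)%nat with (n - p)%nat by lia.
  apply rc_sub; try lia. intros; apply Rmult_le_pos; [apply s_nonneg; auto|apply vn_nonneg]. Qed.

Lemma HS p r : (1 <= p)%nat -> exists C, 0 <= C /\ forall n d F, (1 <= n)%nat ->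
  Q n d F p r <= C * (Q n d F (S p) (S (S r)) + Q n d F p p).
Proof. intros Hp.
  set (A1 := (2 + INR (S r)) ^ (S r) * (4 * INR p) ^ p).
  set (A2 := (2 + INR r) ^ r * (4 * INR p) ^ p).
  assert (HA1 : 0 <= A1) by (unfold A1; apply Rmult_le_pos; apply pow_le; assert (0 <= INR (S r)) by apply pos_INR; assert (0 <= INR p) by apply pos_INR; lra).
  assert (HA2 : 0 <= A2) by (unfold A2; apply Rmult_le_pos; apply pow_le; assert (0 <= INR r) by apply pos_INR; assert (0 <= INR p) by apply pos_INR; lra).
  assert (TA1 : forall n k, (1 <= n)%nat -> (1 <= k)%nat -> (k <= n + 1)%nat -> (n <= 4 * p * k)%nat ->
     s n (S r) k <= A1 * s n p k) by (intros; apply top_cmp; auto).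
  assert (TA2 : forall n k, (1 <= n)%nat -> (1 <= k)%nat -> (k <= n + 1)%nat -> (n <= 4 * p * k)%nat ->
     s n r k <= A2 * s n p k) by (intros; apply top_cmp; auto).
  clearbody A1 A2.
  exists (8 * INR p * A1 + 4 + A2). split. { assert (0 <= INR p) by apply pos_INR. nra. }
  intros n d F Hn.
  assert (Q1 := Q_nonneg n d F (S p) (S (S r)) Hn). assert (Q2 := Q_nonneg n d F p p Hn).
  assert (Hnpos := INRn_pos n Hn). assert (0 <= INR p) by apply pos_INR.
  destruct (le_lt_dec p n) as [Hpn|Hpn].
  2:{ unfold Q at 1. replace (n + 1 - p)%nat with 0%nat by lia. simpl. rewrite Rmult_0_r.
      apply Rmult_le_pos; [nra|lra]. }
  destruct (pick_top n d F p Hn Hp Hpn) as [K [HK1 [HK2 [HK3 HfK]]]].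
  set (g := nablap n p F) in *.
  set (K1 := (n + 1 - p)%nat) in *.
  set (S1 := rsum_cnt (fun k => s n r k * vnorm2 d (g k)) 1 K).
  set (T := rsum_cnt (fun k => s n r k * vnorm2 d (g k)) (1 + K) (K1 - K)).
  assert (Hsplit : rsum_cnt (fun k => s n r k * vnorm2 d (g k)) 1 K1 = S1 + T).
  { unfold S1, T. rewrite <- rc_app. f_equal. lia. }
  assert (HQr : Q n d F p r = / INR n * (S1 + T)) by (unfold Q; fold g K1; rewrite Hsplit; reflexivity).
  assert (HH := hardy_int n d g r K Hn HK1).
  fold S1 in HH.
  assert (HN := sum_nabla_le n d F p (S (S r)) (K - 1) Hn ltac:(lia)). fold g in HN.
  assert (HgK : s n (S r) K * vnorm2 d (g K) <= A1 * (4 * INR p * Q n d F p p)).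
  { apply Rle_trans with (A1 * (s n p K * vnorm2 d (g K))).
    - rewrite <- Rmult_assoc. apply Rmult_le_compat_r; [apply vn_nonneg|]. apply TA1; auto; lia.
    - apply Rmult_le_compat_l; auto. }
  assert (HT : T <= A2 * (INR n * Q n d F p p)).
  { rewrite <- Q_eq by auto. fold g K1. unfold T. rewrite <- rc_scal.
    apply Rle_trans with (rsum_cnt (fun k => A2 * (s n p k * vnorm2 d (g k))) (1 + K) (K1 - K)).
    - apply rc_le. intros k Hk. rewrite <- Rmult_assoc. apply Rmult_le_compat_r; [apply vn_nonneg|].
      apply TA2; auto; nia.
    - rewrite rc_scal, rc_scal. apply Rmult_le_compat_l; auto. apply rc_sub; try lia.
      intros; apply Rmult_le_pos; [apply s_nonneg; auto|apply vn_nonneg]. }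
  assert (HS1 : 0 <= S1) by (apply rc_nonneg; intros; apply Rmult_le_pos; [apply s_nonneg; auto|apply vn_nonneg]).
  assert (HS1' : S1 <= 2 * (INR n * (A1 * (4 * INR p * Q n d F p p))) + 4 * (INR n * Q n d F (S p) (S (S r)))).
  { assert (INR n * s n (S r) K * vnorm2 d (g K) <= INR n * (A1 * (4 * INR p * Q n d F p p))).
    { rewrite Rmult_assoc. apply Rmult_le_compat_l; lra. }
    assert (0 <= INR r) by apply pos_INR. nra. }
  rewrite HQr. apply Rmult_le_reg_l with (INR n); auto.
  rewrite <- Rmult_assoc, Rinv_r, Rmult_1_l by lra.
  set (q1 := Q n d F (S p) (S (S r))) in *. set (q2 := Q n d F p p) in *. clearbody q1 q2.
  assert (0 <= INR n * (8 * INR p * A1) * q1) by (repeat apply Rmult_le_pos; lra).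
  assert (0 <= INR n * q2) by (repeat apply Rmult_le_pos; lra).
  assert (0 <= INR n * A2 * q1) by (repeat apply Rmult_le_pos; lra).
  assert (E : INR n * ((8 * INR p * A1 + 4 + A2) * (q1 + q2)) =
    INR n * (8 * INR p * A1) * q1 + 2 * (INR n * (A1 * (4 * INR p * q2))) + 4 * (INR n * q1)
    + 4 * (INR n * q2) + INR n * A2 * q1 + A2 * (INR n * q2)) by ring.
  rewrite E. lra. Qed.

Lemma chain t : forall p r, (1 <= p)%nat -> (r + t = p)%nat ->
  exists C, 0 <= C /\ forall n d F E, (1 <= n)%nat ->
    (forall u, (u <= t)%nat -> Q n d F (p + u) (p + u) <= E) -> Q n d F p r <= C * E.
Proof. induction t; intros p r Hp Hr.
  - exists 1. split; [lra|]. intros n d F E Hn HE. specialize (HE 0%nat ltac:(lia)).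
    rewrite Nat.add_0_r in HE. replace r with p by lia. lra.
  - destruct (HS p r Hp) as [C1 [HC1 H1]].
    destruct (IHt (S p) (S (S r)) ltac:(lia) ltac:(lia)) as [C2 [HC2 H2]].
    exists (C1 * (C2 + 1)). split; [apply Rmult_le_pos; lra|]. intros n d F E Hn HE.
    assert (A := H1 n d F Hn).
    assert (B : Q n d F (S p) (S (S r)) <= C2 * E).
    { apply H2; auto. intros u Hu. replace (S p + u)%nat with (p + S u)%nat by lia. apply HE. lia. }
    assert (Cc := HE 0%nat ltac:(lia)). rewrite Nat.add_0_r in Cc.
    assert (0 <= Q n d F p p) by (apply Q_nonneg; auto).
    assert (0 <= Q n d F (S p) (S (S r))) by (apply Q_nonneg; auto).
    apply Rle_trans with (C1 * (C2 * E + E)); [|lra].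
    apply Rle_trans with (1 := A). apply Rmult_le_compat_l; lra. Qed.

Lemma rc_zero lo L : rsum_cnt (fun _ => 0) lo L = 0.
Proof. induction L; simpl; [reflexivity|]. rewrite IHL; ring. Qed.

Lemma sup_up n d (g : seqv) (W : nat -> R) k L : (1 <= n)%nat -> (1 <= k)%nat ->
  (forall m, (k <= m < k + L)%nat -> 0 <= W m <= W (S m)) ->
  W k * vnorm2 d (g k) <= W (k + L)%nat * vnorm2 d (g (k + L)%nat) +
    rsum_cnt (fun m => W m / INR m * vnorm2 d (g (S m)) +
       (1 + INR m) * W m * ((/ INR n) ^ 2 * vnorm2 d (nabla n g m))) k L.
Proof. intros Hn Hk HW.
  assert (T := tele_up (fun m => W m * vnorm2 d (g m)) (fun _ => 0)
    (fun m => W m / INR m * vnorm2 d (g (S m)) + (1 + INR m) * W m * ((/ INR n) ^ 2 * vnorm2 d (nabla n g m))) k L).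
  rewrite rc_zero in T. cbv beta in T. rewrite Rplus_0_r in T. apply T.
  intros m Hm. rewrite Rplus_0_r. destruct (HW m Hm) as [W0 W1].
  assert (Hmm : 0 < INR m) by (apply lt_0_INR; lia).
  assert (Ht : 0 < / INR m) by (apply Rinv_0_lt_compat; lra).
  assert (H := up_step n d g m _ Hn Ht). rewrite Rinv_inv in H.
  set (a := vnorm2 d (g m)) in *. set (b := vnorm2 d (g (S m))) in *.
  set (X := (/ INR n) ^ 2 * vnorm2 d (nabla n g m)) in *.
  assert (0 <= b) by apply vn_nonneg.
  assert (E : W m * ((1 + / INR m) * b + (1 + INR m) * X) = W m * b + (W m / INR m * b + (1 + INR m) * W m * X))
    by (field; lra).
  assert (W m * a <= W m * ((1 + / INR m) * b + (1 + INR m) * X)) by (apply Rmult_le_compat_l; auto).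
  assert (W m * b <= W (S m) * b) by (apply Rmult_le_compat_r; auto).
  lra. Qed.

Lemma sup_down n d (g : seqv) K L : (1 <= n)%nat ->
  vnorm2 d (g (K + L)%nat) <= vnorm2 d (g K) +
    rsum_cnt (fun m => / INR n * vnorm2 d (g m) + (1 + INR n) * ((/ INR n) ^ 2 * vnorm2 d (nabla n g m))) K L.
Proof. intros Hn. apply (tele_down (fun m => vnorm2 d (g m))). intros m Hm.
  assert (Hnn := INRn_pos n Hn).
  assert (Ht : 0 < / INR n) by (apply Rinv_0_lt_compat; lra).
  assert (H := down_step n d g m _ Hn Ht). rewrite Rinv_inv in H. lra. Qed.

Lemma s0 n k : s n 0 k = 1.
Proof. unfold s. simpl. field. Qed.

Lemma down_bound p : (1 <= p)%nat -> exists D, 0 <= D /\ forall n d F K k, (1 <= n)%nat ->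
  (1 <= K)%nat -> (n <= 4 * p * K)%nat -> (K <= k)%nat -> (k <= n + 1 - p)%nat ->
  s n p K * vnorm2 d (nablap n p F K) <= 4 * INR p * Q n d F p p ->
  vnorm2 d (nablap n p F k) <= D * (Q n d F p p + Q n d F (S p) (S p)).
Proof. intros Hp.
  set (A := (2 + INR 0) ^ 0 * (4 * INR p) ^ p).
  set (B := (2 + INR 0) ^ 0 * (4 * INR p) ^ (S p)).
  assert (TA : forall n k, (1 <= n)%nat -> (1 <= k)%nat -> (k <= n + 1)%nat -> (n <= 4 * p * k)%nat ->
     s n 0 k <= A * s n p k) by (intros; apply top_cmp; auto).
  assert (TB : forall n k, (1 <= n)%nat -> (1 <= k)%nat -> (k <= n + 1)%nat -> (n <= 4 * p * k)%nat ->
     s n 0 k <= B * s n (S p) k) by (intros; apply top_cmp; auto).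
  assert (HA : 0 <= A) by (unfold A; apply Rmult_le_pos; apply pow_le; assert (0 <= INR p) by apply pos_INR; simpl; lra).
  assert (HB : 0 <= B) by (unfold B; apply Rmult_le_pos; apply pow_le; assert (0 <= INR p) by apply pos_INR; simpl; lra).
  clearbody A B.
  assert (Hp0 : 0 <= INR p) by apply pos_INR.
  exists (4 * INR p * A + A + 2 * B). split; [nra|].
  intros n d F K k Hn HK1 HK2 HKk Hk HfK.
  set (g := nablap n p F) in *.
  assert (Hnn := INRn_pos n Hn).
  assert (Q1 := Q_nonneg n d F p p Hn). assert (Q2 := Q_nonneg n d F (S p) (S p) Hn).
  set (q1 := Q n d F p p) in *. set (q2 := Q n d F (S p) (S p)) in *.
  assert (HD := sup_down n d g K (k - K) Hn). replace (K + (k - K))%nat with k in HD by lia.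
  rewrite rc_plus, rc_scal, rc_scal in HD.
  rewrite (rc_scal ((/ INR n) ^ 2) (fun m => vnorm2 d (nabla n g m))) in HD.
  assert (H1 : vnorm2 d (g K) <= A * (4 * INR p * q1)).
  { rewrite <- (Rmult_1_l (vnorm2 d (g K))). rewrite <- (s0 n K).
    apply Rle_trans with (A * (s n p K * vnorm2 d (g K))).
    - rewrite <- Rmult_assoc. apply Rmult_le_compat_r; [apply vn_nonneg|]. apply TA; auto; lia.
    - apply Rmult_le_compat_l; auto. }
  assert (H2 : rsum_cnt (fun m => vnorm2 d (g m)) K (k - K) <= A * (INR n * q1)).
  { unfold q1. rewrite <- Q_eq by auto. fold g. rewrite <- rc_scal.
    apply Rle_trans with (rsum_cnt (fun m => A * (s n p m * vnorm2 d (g m))) K (k - K)).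
    - apply rc_le. intros m Hm. rewrite <- Rmult_assoc. rewrite <- (Rmult_1_l (vnorm2 d (g m))) at 1.
      rewrite <- (s0 n m). apply Rmult_le_compat_r; [apply vn_nonneg|]. apply TA; auto; nia.
    - apply rc_sub; try lia. intros; apply Rmult_le_pos; auto; apply Rmult_le_pos; [apply s_nonneg; auto|apply vn_nonneg]. }
  assert (H3 : rsum_cnt (fun m => vnorm2 d (nabla n g m)) K (k - K) <= B * (INR n * q2)).
  { unfold q2. rewrite <- Q_eq by auto. replace (n + 1 - S p)%nat with (n - p)%nat by lia. rewrite <- rc_scal.
    apply Rle_trans with (rsum_cnt (fun m => B * (s n (S p) m * vnorm2 d (nabla n g m))) K (k - K)).
    - apply rc_le. intros m Hm. rewrite <- Rmult_assoc. rewrite <- (Rmult_1_l (vnorm2 d (nabla n g m))) at 1.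
      rewrite <- (s0 n m). apply Rmult_le_compat_r; [apply vn_nonneg|]. apply TB; auto; nia.
    - apply rc_sub; try lia. intros; apply Rmult_le_pos; auto; apply Rmult_le_pos; [apply s_nonneg; auto|apply vn_nonneg]. }
  assert (E1 : / INR n * (A * (INR n * q1)) = A * q1) by (field; lra).
  assert (Hc : (1 + INR n) * (/ INR n) ^ 2 <= 2 * / INR n).
  { assert (1 <= INR n) by (apply (le_INR 1); lia).
    apply Rmult_le_reg_r with (INR n ^ 2). nra.
    replace ((1 + INR n) * (/ INR n) ^ 2 * INR n ^ 2) with (1 + INR n) by (field; lra).
    replace (2 * / INR n * INR n ^ 2) with (2 * INR n) by (field; lra). lra. }
  assert (H3' : (1 + INR n) * ((/ INR n) ^ 2 * rsum_cnt (fun m => vnorm2 d (nabla n g m)) K (k - K)) <= 2 * B * q2).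
  { rewrite <- Rmult_assoc. assert (0 <= rsum_cnt (fun m => vnorm2 d (nabla n g m)) K (k - K))
      by (apply rc_nonneg; intros; apply vn_nonneg).
    apply Rle_trans with (2 * / INR n * (B * (INR n * q2))).
    - apply Rmult_le_compat; auto. apply Rmult_le_pos; [lra|apply pow_le; left; apply Rinv_0_lt_compat; lra].
    - right. field. lra. }
  assert (H2' : / INR n * rsum_cnt (fun m => vnorm2 d (g m)) K (k - K) <= A * q1).
  { rewrite <- E1. apply Rmult_le_compat_l; auto. left; apply Rinv_0_lt_compat; lra. }
  assert (0 <= A * q2) by nra. assert (0 <= B * q1) by nra. assert (0 <= INR p * A * q2) by nra.
  assert (E : (4 * INR p * A + A + 2 * B) * (q1 + q2) = A * (4 * INR p * q1) + A * q1 + 2 * B * q2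
     + 2 * (B * q1) + 4 * (INR p * A * q2) + A * q2) by ring.
  rewrite E. lra. Qed.

Lemma s_div n r m : (1 <= n)%nat -> (1 <= m)%nat -> s n (S r) m / INR m = / INR n * s n r (S m).
Proof. intros Hn Hm. unfold s. rewrite rising_shift. cbn [pow].
  assert (0 < INR n) by (apply INRn_pos; auto). assert (0 < INR m) by (apply lt_0_INR; lia).
  assert (0 < INR n ^ r) by (apply pow_lt; auto). field. lra. Qed.

Lemma s_up n r m : (1 <= n)%nat -> (1 + INR m) * s n r m <= 2 * INR n * s n (S r) m + (1 - INR m) * s n r m.
Proof. intros Hn. unfold s. cbn [rising pow]. rewrite plus_INR.
  assert (0 < INR n) by (apply INRn_pos; auto). assert (0 <= INR m) by apply pos_INR.
  assert (0 < INR n ^ r) by (apply pow_lt; auto). assert (0 <= INR r) by apply pos_INR.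
  assert (0 <= rising m r / INR n ^ r) by (apply Rmult_le_pos; [apply rising_nonneg| left; apply Rinv_0_lt_compat; lra]).
  replace (2 * INR n * (rising m r * (INR m + INR r) / (INR n * INR n ^ r))) with
    (2 * (INR m + INR r) * (rising m r / INR n ^ r)) by (field; lra).
  nra. Qed.

Lemma s_mono n r m : (1 <= n)%nat -> s n r m <= s n r (S m).
Proof. intros Hn. unfold s. apply Rmult_le_compat_r. left; apply Rinv_0_lt_compat, pow_lt, INRn_pos; auto.
  apply rising_mono. Qed.

Lemma SI p r : (1 <= p)%nat -> exists C, 0 <= C /\ forall n d F, (1 <= n)%nat ->
  rmax_cnt (fun k => s n (S r) k * vnorm2 d (nablap n p F k)) 1 (n + 1 - p) <=
  C * (Q n d F p p + Q n d F p r + Q n d F (S p) (S (S r)) + Q n d F (S p) (S p)).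
Proof. intros Hp.
  set (A := (2 + INR (S r)) ^ (S r) * (4 * INR p) ^ p).
  set (B0 := (2 + INR (S r)) ^ (S r)).
  assert (TA : forall n k, (1 <= n)%nat -> (1 <= k)%nat -> (k <= n + 1)%nat -> (n <= 4 * p * k)%nat ->
     s n (S r) k <= A * s n p k) by (intros; apply top_cmp; auto).
  assert (TB : forall n k, (1 <= n)%nat -> (1 <= k)%nat -> (k <= n + 1)%nat -> (n <= 4 * p * k)%nat ->
     s n (S r) k <= B0).
  { intros. unfold B0. apply Rle_trans with ((2+INR(S r))^(S r) * (4*INR p)^0 * s n 0 k).
    apply top_cmp; auto. rewrite s0. simpl. lra. }
  assert (Hp0 : 0 <= INR p) by apply pos_INR.
  assert (HA : 0 <= A) by (unfold A; apply Rmult_le_pos; apply pow_le; assert (0 <= INR (S r)) by apply pos_INR; lra).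
  assert (HB : 0 <= B0) by (unfold B0; apply pow_le; assert (0 <= INR (S r)) by apply pos_INR; lra).
  clearbody A B0.
  destruct (down_bound p Hp) as [D [HD0 HD]].
  exists (A * (4 * INR p) + 3 + B0 * D). split; [nra|].
  intros n d F Hn.
  assert (Hnn := INRn_pos n Hn).
  assert (Q1 := Q_nonneg n d F p p Hn). assert (Q2 := Q_nonneg n d F p r Hn).
  assert (Q3 := Q_nonneg n d F (S p) (S (S r)) Hn). assert (Q4 := Q_nonneg n d F (S p) (S p) Hn).
  assert (HC0 : 0 <= (A * (4 * INR p) + 3 + B0 * D) * (Q n d F p p + Q n d F p r + Q n d F (S p) (S (S r)) + Q n d F (S p) (S p))).
  { apply Rmult_le_pos; [nra|lra]. }
  apply rmax_le; auto. intros k Hk.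
  destruct (le_lt_dec p n) as [Hpn|Hpn]; [|lia].
  destruct (pick_top n d F p Hn Hp Hpn) as [K [HK1 [HK2 [HK3 HfK]]]].
  set (g := nablap n p F) in *.
  destruct (le_lt_dec k K) as [HkK|HkK].
  -
    assert (HU := sup_up n d g (s n (S r)) k (K - k) Hn ltac:(lia)
       (fun m Hm => conj (s_nonneg n (S r) m Hn) (s_mono n (S r) m Hn))).
    replace (k + (K - k))%nat with K in HU by lia.
    assert (HT : rsum_cnt (fun m => s n (S r) m / INR m * vnorm2 d (g (S m)) +
       (1 + INR m) * s n (S r) m * ((/ INR n) ^ 2 * vnorm2 d (nabla n g m))) k (K - k)
       <= / INR n * rsum_cnt (fun m => s n r m * vnorm2 d (g m)) (S k) (K - k)
          + 2 * / INR n * rsum_cnt (fun m => s n (S (S r)) m * vnorm2 d (nabla n g m)) k (K - k)).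
    { rewrite <- rc_shift, <- !rc_scal, <- rc_plus. apply rc_le. intros m Hm.
      rewrite s_div by (auto; lia).
      assert (Hsu := s_up n (S r) m Hn).
      assert (Hm1 : 1 <= INR m) by (apply (le_INR 1); lia).
      assert (0 <= s n (S r) m) by (apply s_nonneg; auto).
      assert (X0 : 0 <= (/ INR n) ^ 2 * vnorm2 d (nabla n g m)).
      { apply Rmult_le_pos; [apply pow_le; left; apply Rinv_0_lt_compat; lra| apply vn_nonneg]. }
      assert (Hsu' : (1 + INR m) * s n (S r) m <= 2 * INR n * s n (S (S r)) m) by nra.
      assert (E : 2 * / INR n * (s n (S (S r)) m * vnorm2 d (nabla n g m)) =
        (2 * INR n * s n (S (S r)) m) * ((/ INR n) ^ 2 * vnorm2 d (nabla n g m))) by (field; lra).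
      rewrite E. assert (0 <= vnorm2 d (g (S m))) by apply vn_nonneg.
      rewrite Rmult_assoc. apply Rplus_le_compat; [right; ring|]. apply Rmult_le_compat_r; auto. }
    assert (HS1 : rsum_cnt (fun m => s n r m * vnorm2 d (g m)) (S k) (K - k) <= INR n * Q n d F p r).
    { rewrite <- Q_eq by auto. apply rc_sub; try lia. intros; apply Rmult_le_pos; [apply s_nonneg; auto|apply vn_nonneg]. }
    assert (HS2 : rsum_cnt (fun m => s n (S (S r)) m * vnorm2 d (nabla n g m)) k (K - k) <= INR n * Q n d F (S p) (S (S r))).
    { rewrite <- Q_eq by auto. replace (n + 1 - S p)%nat with (n - p)%nat by lia.
      apply rc_sub; try lia. intros; apply Rmult_le_pos; [apply s_nonneg; auto|apply vn_nonneg]. }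
    assert (HgK : s n (S r) K * vnorm2 d (g K) <= A * (4 * INR p * Q n d F p p)).
    { apply Rle_trans with (A * (s n p K * vnorm2 d (g K))).
      - rewrite <- Rmult_assoc. apply Rmult_le_compat_r; [apply vn_nonneg|]. apply TA; auto; lia.
      - apply Rmult_le_compat_l; auto. }
    assert (Hi : 0 < / INR n) by (apply Rinv_0_lt_compat; lra).
    assert (HS1' : / INR n * rsum_cnt (fun m => s n r m * vnorm2 d (g m)) (S k) (K - k) <= Q n d F p r).
    { apply Rle_trans with (/ INR n * (INR n * Q n d F p r)). apply Rmult_le_compat_l; lra. right; field; lra. }
    assert (HS2' : 2 * / INR n * rsum_cnt (fun m => s n (S (S r)) m * vnorm2 d (nabla n g m)) k (K - k) <= 2 * Q n d F (S p) (S (S r))).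
    { apply Rle_trans with (2 * / INR n * (INR n * Q n d F (S p) (S (S r)))). apply Rmult_le_compat_l; lra. right; field; lra. }
    set (q1 := Q n d F p p) in *. set (q2 := Q n d F p r) in *. set (q3 := Q n d F (S p) (S (S r))) in *.
    set (q4 := Q n d F (S p) (S p)) in *. clearbody q1 q2 q3 q4.
    assert (0 <= A * (4 * INR p) * (q2 + q3 + q4)) by (apply Rmult_le_pos; nra).
    assert (0 <= B0 * D * (q1 + q2 + q3 + q4)) by (apply Rmult_le_pos; nra).
    assert (E : (A * (4 * INR p) + 3 + B0 * D) * (q1 + q2 + q3 + q4) =
       A * (4 * INR p * q1) + A * (4 * INR p) * (q2 + q3 + q4) + 3 * (q1 + q2 + q3 + q4) + B0 * D * (q1 + q2 + q3 + q4)) by ring.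
    rewrite E. lra.
  -
    assert (HN := HD n d F K k Hn HK1 HK3 ltac:(lia) ltac:(lia) HfK). fold g in HN.
    assert (Hs := TB n k Hn ltac:(lia) ltac:(lia) ltac:(nia)).
    set (q1 := Q n d F p p) in *. set (q2 := Q n d F p r) in *. set (q3 := Q n d F (S p) (S (S r))) in *.
    set (q4 := Q n d F (S p) (S p)) in *. clearbody q1 q2 q3 q4.
    apply Rle_trans with (B0 * (D * (q1 + q4))).
    + apply Rmult_le_compat; auto. apply s_nonneg; auto. apply vn_nonneg.
    + assert (0 <= A * (4 * INR p) * (q1 + q2 + q3 + q4)) by (apply Rmult_le_pos; nra).
      assert (0 <= B0 * D * (q2 + q3)) by (apply Rmult_le_pos; nra).
      assert (E : (A * (4 * INR p) + 3 + B0 * D) * (q1 + q2 + q3 + q4) =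
       A * (4 * INR p) * (q1 + q2 + q3 + q4) + 3 * (q1 + q2 + q3 + q4) + B0 * (D * (q1 + q4)) + B0 * D * (q2 + q3)) by ring.
      rewrite E. lra.
Qed.

Definition h k := half_rising k / INR (fact (k - 1)).

Lemma hr_pos k : 0 < half_rising k.
Proof. induction k; simpl; [lra|]. apply Rmult_lt_0_compat; auto.
  assert (0 <= INR k) by apply pos_INR. assert (0 < / 2) by lra. lra. Qed.

Lemma fact_pos k : 0 < INR (fact k).
Proof. apply lt_0_INR. apply lt_O_fact. Qed.

Lemma h_pos k : 0 < h k.
Proof. unfold h. apply Rdiv_lt_0_compat; [apply hr_pos|apply fact_pos]. Qed.

Lemma h_S k : (1 <= k)%nat -> h (S k) = h k * (1 + / (2 * INR k)).
Proof. intros Hk. destruct k as [|k]; [lia|]. unfold h.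
  replace (S (S k) - 1)%nat with (S k) by lia. replace (S k - 1)%nat with k by lia.
  change (half_rising (S (S k))) with (half_rising (S k) * (INR (S k) + / 2)).
  change (fact (S k)) with (S k * fact k)%nat. rewrite mult_INR.
  assert (0 < INR (S k)) by (apply lt_0_INR; lia). assert (0 < INR (fact k)) by apply fact_pos.
  field. lra. Qed.

Lemma h_sq k : (1 <= k)%nat -> h k ^ 2 <= INR k - / 4.
Proof. intros Hk. induction k; [lia|]. destruct k.
  - unfold h. simpl. lra.
  - rewrite h_S by lia. assert (IH := IHk ltac:(lia)).
    set (x := h (S k)) in *. replace (INR (S (S k))) with (INR (S k) + 1) by (rewrite (S_INR (S k)); ring).
    set (m := INR (S k)) in *.
    assert (Hm : 1 <= m) by (unfold m; apply (le_INR 1); lia).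
    assert (E : (x * (1 + / (2 * m))) ^ 2 = x ^ 2 * (2*m+1)^2 / (4 * m^2)) by (field; lra).
    rewrite E. apply Rmult_le_reg_r with (4 * m ^ 2); [nra|].
    replace (x ^ 2 * (2 * m + 1) ^ 2 / (4 * m ^ 2) * (4 * m ^ 2)) with (x ^ 2 * (2 * m + 1) ^ 2) by (field; lra).
    assert (x ^ 2 * (2 * m + 1) ^ 2 <= (m - / 4) * (2 * m + 1) ^ 2) by (apply Rmult_le_compat_r; [apply pow2_ge_0|auto]).
    nra. Qed.

Lemma s_half_eq n k : (1 <= n)%nat -> s_half n k = sqrt PI / sqrt (INR n) * h k.
Proof. intros Hn. unfold s_half, h.
  assert (0 < sqrt (INR n)) by (apply sqrt_lt_R0, INRn_pos; auto).
  assert (0 < INR (fact (k - 1))) by apply fact_pos. field. lra. Qed.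

Lemma sig_nonneg n : (1 <= n)%nat -> 0 <= sqrt PI / sqrt (INR n).
Proof. intros Hn. apply Rmult_le_pos; [apply sqrt_pos|].
  left; apply Rinv_0_lt_compat, sqrt_lt_R0, INRn_pos; auto. Qed.

Lemma s_half_nonneg n k : (1 <= n)%nat -> 0 <= s_half n k.
Proof. intros Hn. rewrite s_half_eq by auto. apply Rmult_le_pos; [apply sig_nonneg; auto|left; apply h_pos]. Qed.

Lemma s_half_le4 n k : (1 <= n)%nat -> (1 <= k)%nat -> (k <= n + 1)%nat -> s_half n k <= 4.
Proof. intros Hn Hk1 Hk2. assert (H0 := s_half_nonneg n k Hn).
  assert (Hsq : s_half n k ^ 2 <= 16).
  { rewrite s_half_eq by auto. assert (Hnn := INRn_pos n Hn).
    assert (E : (sqrt PI / sqrt (INR n) * h k) ^ 2 = PI / INR n * h k ^ 2).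
    { assert (0 < sqrt (INR n)) by (apply sqrt_lt_R0; auto).
      assert (E1 : sqrt PI ^ 2 = PI) by (simpl; rewrite Rmult_1_r; apply sqrt_sqrt; left; apply PI_RGT_0).
      assert (E2 : sqrt (INR n) ^ 2 = INR n) by (simpl; rewrite Rmult_1_r; apply sqrt_sqrt; lra).
      replace ((sqrt PI / sqrt (INR n) * h k) ^ 2) with (sqrt PI ^ 2 / sqrt (INR n) ^ 2 * h k ^ 2) by (field; lra).
      rewrite E1, E2. reflexivity. }
    rewrite E. assert (Hh := h_sq k Hk1). assert (HP := PI_4). assert (HP0 := PI_RGT_0).
    assert (INR k <= INR n + 1) by (rewrite <- S_INR; apply le_INR; lia).
    assert (1 <= INR n) by (apply (le_INR 1); lia).
    assert (0 <= h k ^ 2) by apply pow2_ge_0.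
    apply Rle_trans with (4 / INR n * INR k).
    - apply Rmult_le_compat; try lra. apply Rmult_le_pos; [lra|left; apply Rinv_0_lt_compat; lra].
      unfold Rdiv. apply Rmult_le_compat_r; [left; apply Rinv_0_lt_compat; lra|lra].
    - apply Rmult_le_reg_r with (INR n); auto. replace (4 / INR n * INR k * INR n) with (4 * INR k) by (field; lra). nra. }
  nra. Qed.

Lemma hardy_half n d (g : seqv) K : (1 <= n)%nat -> (1 <= K)%nat ->
  h 1 * vnorm2 d (g 1%nat) + rsum_cnt (fun m => h m / INR m / 4 * vnorm2 d (g (S m))) 1 (K - 1) <=
  h K * vnorm2 d (g K) + rsum_cnt (fun m => (1 + 4 * INR m) * h m * ((/ INR n) ^ 2 * vnorm2 d (nabla n g m))) 1 (K - 1).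
Proof. intros Hn HK.
  assert (T := tele_up (fun m => h m * vnorm2 d (g m)) (fun m => h m / INR m / 4 * vnorm2 d (g (S m)))
    (fun m => (1 + 4 * INR m) * h m * ((/ INR n) ^ 2 * vnorm2 d (nabla n g m))) 1 (K - 1)).
  replace (1 + (K - 1))%nat with K in T by lia. apply T.
  intros m Hm. cbv beta.
  assert (Hmm : 1 <= INR m) by (apply (le_INR 1); lia).
  assert (Ht : 0 < / (4 * INR m)) by (apply Rinv_0_lt_compat; lra).
  assert (H := up_step n d g m _ Hn Ht). rewrite Rinv_inv in H.
  rewrite h_S by lia. assert (Hh := h_pos m).
  set (a := vnorm2 d (g m)) in *. set (b := vnorm2 d (g (S m))) in *.
  set (X := (/ INR n) ^ 2 * vnorm2 d (nabla n g m)) in *.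
  assert (h m * a <= h m * ((1 + / (4 * INR m)) * b + (1 + 4 * INR m) * X)) by (apply Rmult_le_compat_l; lra).
  assert (E : h m * ((1 + / (4 * INR m)) * b + (1 + 4 * INR m) * X) + h m / INR m / 4 * b =
     h m * (1 + / (2 * INR m)) * b + (1 + 4 * INR m) * h m * X) by (field; lra).
  lra. Qed.

Lemma s1 n m : s n 1 m = INR m / INR n.
Proof. unfold s. cbn [rising pow]. rewrite Nat.add_0_r. unfold Rdiv. rewrite Rmult_1_l, Rmult_1_r. reflexivity. Qed.

Lemma h_mono m : (1 <= m)%nat -> h m <= h (S m).
Proof. intros. rewrite h_S by lia.
  assert (0 < h m) by apply h_pos. assert (1 <= INR m) by (apply (le_INR 1); lia).
  assert (0 < / (2 * INR m)) by (apply Rinv_0_lt_compat; lra). nra. Qed.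

Lemma SH p : (1 <= p)%nat -> exists C, 0 <= C /\ forall n d F, (1 <= n)%nat ->
  rmax_cnt (fun k => s_half n k * vnorm2 d (nablap n p F k)) 1 (n + 1 - p) <=
  C * (Q n d F p p + Q n d F (S p) 1 + Q n d F (S p) (S p)).
Proof. intros Hp.
  destruct (down_bound p Hp) as [D [HD0 HD]].
  exists (20 * D + 100). split; [lra|].
  intros n d F Hn.
  assert (Hnn := INRn_pos n Hn).
  assert (Q1 := Q_nonneg n d F p p Hn). assert (Q2 := Q_nonneg n d F (S p) 1 Hn).
  assert (Q4 := Q_nonneg n d F (S p) (S p) Hn).
  apply rmax_le; [apply Rmult_le_pos; lra|]. intros k Hk.
  destruct (le_lt_dec p n) as [Hpn|Hpn]; [|lia].
  destruct (pick_top n d F p Hn Hp Hpn) as [K [HK1 [HK2 [HK3 HfK]]]].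
  set (g := nablap n p F) in *.
  assert (HNk : forall k, (K <= k <= n + 1 - p)%nat -> vnorm2 d (g k) <= D * (Q n d F p p + Q n d F (S p) (S p))).
  { intros k' Hk'. apply (HD n d F K k' Hn HK1 HK3); auto; lia. }
  destruct (le_lt_dec k K) as [HkK|HkK].
  - assert (HU := sup_up n d g h k (K - k) Hn ltac:(lia)
       (fun m Hm => conj (Rlt_le _ _ (h_pos m)) (h_mono m ltac:(lia)))).
    replace (k + (K - k))%nat with K in HU by lia.
    rewrite rc_plus in HU.
    assert (HH := hardy_half n d g K Hn HK1).
    set (Z := rsum_cnt (fun m => (1 + 4 * INR m) * h m * ((/ INR n) ^ 2 * vnorm2 d (nabla n g m))) 1 (K - 1)) in *.
    assert (Hpos : forall m, (1 <= m)%nat -> 0 <= (/ INR n) ^ 2 * vnorm2 d (nabla n g m)).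
    { intros. apply Rmult_le_pos; [apply pow_le; left; apply Rinv_0_lt_compat; lra| apply vn_nonneg]. }
    assert (HR1 : rsum_cnt (fun m => h m / INR m * vnorm2 d (g (S m))) k (K - k)
        <= rsum_cnt (fun m => h m / INR m * vnorm2 d (g (S m))) 1 (K - 1)).
    { apply rc_sub; try lia. intros m Hm. apply Rmult_le_pos; [|apply vn_nonneg].
      left; apply Rdiv_lt_0_compat; [apply h_pos|apply lt_0_INR; lia]. }
    assert (HR1' : rsum_cnt (fun m => h m / INR m * vnorm2 d (g (S m))) 1 (K - 1) <= 4 * (h K * vnorm2 d (g K) + Z)).
    { assert (E : rsum_cnt (fun m => h m / INR m / 4 * vnorm2 d (g (S m))) 1 (K - 1) =
         / 4 * rsum_cnt (fun m => h m / INR m * vnorm2 d (g (S m))) 1 (K - 1)).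
      { rewrite <- rc_scal. apply rc_ext. intros. field. apply not_0_INR. lia. }
      rewrite E in HH. assert (0 <= h 1%nat * vnorm2 d (g 1%nat)) by (apply Rmult_le_pos; [left; apply h_pos|apply vn_nonneg]).
      lra. }
    assert (HR2 : rsum_cnt (fun m => (1 + INR m) * h m * ((/ INR n) ^ 2 * vnorm2 d (nabla n g m))) k (K - k) <= Z).
    { apply Rle_trans with (rsum_cnt (fun m => (1 + INR m) * h m * ((/ INR n) ^ 2 * vnorm2 d (nabla n g m))) 1 (K - 1)).
      - apply rc_sub; try lia. intros m Hm. apply Rmult_le_pos; [|apply Hpos; lia].
        apply Rmult_le_pos; [assert (0 <= INR m) by apply pos_INR; lra|left; apply h_pos].
      - apply rc_le. intros m Hm. apply Rmult_le_compat_r; [apply Hpos; lia|].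
        apply Rmult_le_compat_r; [left; apply h_pos|]. assert (0 <= INR m) by apply pos_INR; lra. }
    assert (Hk5 : h k * vnorm2 d (g k) <= 5 * (h K * vnorm2 d (g K)) + 5 * Z) by lra.
    set (sig := sqrt PI / sqrt (INR n)).
    assert (Hsig := sig_nonneg n Hn). fold sig in Hsig.
    assert (HsZ : sig * Z <= 20 * Q n d F (S p) 1).
    { unfold Z. rewrite <- rc_scal.
      apply Rle_trans with (rsum_cnt (fun m => 20 * / INR n * (s n 1 m * vnorm2 d (nabla n g m))) 1 (K - 1)).
      - apply rc_le. intros m Hm. rewrite s1.
        assert (Hs4 := s_half_le4 n m Hn ltac:(lia) ltac:(lia)). rewrite s_half_eq in Hs4 by auto. fold sig in Hs4.
        assert (X0 := Hpos m ltac:(lia)).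
        assert (Hm1 : 1 <= INR m) by (apply (le_INR 1); lia).
        assert (E : 20 * / INR n * (INR m / INR n * vnorm2 d (nabla n g m)) = 20 * INR m * ((/ INR n) ^ 2 * vnorm2 d (nabla n g m)))
          by (field; lra).
        rewrite E. replace (sig * ((1 + 4 * INR m) * h m * ((/ INR n) ^ 2 * vnorm2 d (nabla n g m)))) with
          ((1 + 4 * INR m) * (sig * h m) * ((/ INR n) ^ 2 * vnorm2 d (nabla n g m))) by ring.
        apply Rmult_le_compat_r; auto.
        assert (0 <= sig * h m) by (apply Rmult_le_pos; [auto|left; apply h_pos]). nra.
      - rewrite rc_scal. replace (20 * Q n d F (S p) 1) with (20 * / INR n * (INR n * Q n d F (S p) 1)) by (field; lra).
        apply Rmult_le_compat_l; [assert (0 < / INR n) by (apply Rinv_0_lt_compat; lra); lra|].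
        rewrite <- Q_eq by auto. replace (n + 1 - S p)%nat with (n - p)%nat by lia.
        apply rc_sub; try lia. intros; apply Rmult_le_pos; [apply s_nonneg; auto|apply vn_nonneg]. }
    assert (HKb : sig * (h K * vnorm2 d (g K)) <= 4 * (D * (Q n d F p p + Q n d F (S p) (S p)))).
    { rewrite <- Rmult_assoc. assert (Hs4 := s_half_le4 n K Hn ltac:(lia) ltac:(lia)). rewrite s_half_eq in Hs4 by auto.
      fold sig in Hs4. apply Rmult_le_compat; [apply Rmult_le_pos; [auto|left; apply h_pos] | apply vn_nonneg | exact Hs4 | apply HNk; lia]. }
    rewrite s_half_eq by auto. fold sig.
    assert (sig * (h k * vnorm2 d (g k)) <= sig * (5 * (h K * vnorm2 d (g K)) + 5 * Z)) by (apply Rmult_le_compat_l; auto).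
    set (q1 := Q n d F p p) in *. set (q2 := Q n d F (S p) 1) in *. set (q4 := Q n d F (S p) (S p)) in *.
    clearbody q1 q2 q4.
    assert (0 <= D * q2) by nra. assert (0 <= D * (q1 + q4)) by nra.
    assert (E : (20 * D + 100) * (q1 + q2 + q4) = 20 * (D * (q1 + q4)) + 20 * (D * q2) + 100 * (q1 + q4) + 100 * q2) by ring.
    rewrite E. rewrite <- Rmult_assoc. nra.
  - assert (Hs4 := s_half_le4 n k Hn ltac:(lia) ltac:(lia)).
    assert (HN := HNk k ltac:(lia)).
    set (q1 := Q n d F p p) in *. set (q2 := Q n d F (S p) 1) in *. set (q4 := Q n d F (S p) (S p)) in *.
    clearbody q1 q2 q4.
    apply Rle_trans with (4 * (D * (q1 + q4))).
    + apply Rmult_le_compat; auto. apply s_half_nonneg; auto. apply vn_nonneg.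
    + assert (0 <= D * (q1 + q4)) by nra. assert (0 <= D * q2) by nra. nra.
Qed.

Lemma rsum_1 f hi : rsum f 1 hi = rsum_cnt f 1 hi.
Proof. unfold rsum. simpl. rewrite Nat.sub_0_r. reflexivity. Qed.

Lemma rsum_0 f hi : rsum f 0 hi = rsum_cnt f 0 (S hi).
Proof. reflexivity. Qed.

Lemma snorm_Q n d r m f : snorm2 n d (s n r) m f = Q n d (ext n f) m r.
Proof. unfold snorm2, Q. rewrite rsum_1. reflexivity. Qed.

Lemma snorminf_eq n d w m f : snorminf2 n d w m f =
  rmax_cnt (fun k => w k * vnorm2 d (nablap n m (ext n f) k)) 1 (n + 1 - m).
Proof. unfold snorminf2, rmax. simpl. rewrite Nat.sub_0_r. reflexivity. Qed.

Lemma inner_nonneg n d eta deta l : (1 <= n)%nat ->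
  0 <= rsum (fun k => s n l k * vnorm2 d (nablap n l (ext n deta) k)
      + s n (S l) k * vnorm2 d (nablap n (S l) (ext n eta) k)) 1 (n - Nat.div2 l).
Proof. intros Hn. rewrite rsum_1. apply rc_nonneg. intros.
  assert (0 <= s n l k) by (apply s_nonneg; auto). assert (0 <= s n (S l) k) by (apply s_nonneg; auto).
  assert (0 <= vnorm2 d (nablap n l (ext n deta) k)) by apply vn_nonneg.
  assert (0 <= vnorm2 d (nablap n (S l) (ext n eta) k)) by apply vn_nonneg. nra. Qed.

Lemma energy_ge n d M eta deta l : (1 <= n)%nat -> (l <= M)%nat ->
  / INR n * rsum (fun k => s n l k * vnorm2 d (nablap n l (ext n deta) k)
      + s n (S l) k * vnorm2 d (nablap n (S l) (ext n eta) k)) 1 (n - Nat.div2 l) <= energy n d M eta deta.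
Proof. intros Hn Hl. unfold energy. apply Rmult_le_compat_l.
  left; apply Rinv_0_lt_compat, INRn_pos; auto.
  rewrite rsum_0. apply (rc_term (fun l => rsum (fun k => s n l k * vnorm2 d (nablap n l (ext n deta) k)
      + s n (S l) k * vnorm2 d (nablap n (S l) (ext n eta) k)) 1 (n - Nat.div2 l)) 0 (S M) l). lia.
  intros; apply inner_nonneg; auto. Qed.

Lemma energy_nonneg n d M eta deta : (1 <= n)%nat -> 0 <= energy n d M eta deta.
Proof. intros Hn. eapply Rle_trans; [|apply (energy_ge n d M eta deta 0); auto; lia].
  apply Rmult_le_pos; [left; apply Rinv_0_lt_compat, INRn_pos; auto|apply inner_nonneg; auto]. Qed.

Lemma E_eta n d M eta deta q : (1 <= n)%nat -> (1 <= q)%nat -> (q <= M + 1)%nat ->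
  Q n d (ext n eta) q q <= energy n d M eta deta.
Proof. intros Hn Hq1 Hq2. eapply Rle_trans; [|apply (energy_ge n d M eta deta (q - 1)); auto; lia].
  unfold Q. apply Rmult_le_compat_l. left; apply Rinv_0_lt_compat, INRn_pos; auto.
  rewrite rsum_1. replace (S (q - 1)) with q by lia.
  assert (Hd := Nat.div2_decr (q - 1) (q - 1) ltac:(lia)).
  apply Rle_trans with (rsum_cnt (fun k => s n q k * vnorm2 d (nablap n q (ext n eta) k)) 1 (n - Nat.div2 (q - 1))).
  - apply rc_sub; try lia. intros; apply Rmult_le_pos; [apply s_nonneg; auto|apply vn_nonneg].
  - apply rc_le. intros. assert (0 <= s n (q - 1) k) by (apply s_nonneg; auto).
    assert (0 <= vnorm2 d (nablap n (q - 1) (ext n deta) k)) by apply vn_nonneg. nra. Qed.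

Lemma E_deta n d M eta deta q : (1 <= n)%nat -> (1 <= q)%nat -> (q <= M)%nat ->
  Q n d (ext n deta) q q <= energy n d M eta deta.
Proof. intros Hn Hq1 Hq2. eapply Rle_trans; [|apply (energy_ge n d M eta deta q); auto; lia].
  unfold Q. apply Rmult_le_compat_l. left; apply Rinv_0_lt_compat, INRn_pos; auto.
  rewrite rsum_1.
  assert (Hd := Nat.div2_decr q (q - 1) ltac:(lia)).
  apply Rle_trans with (rsum_cnt (fun k => s n q k * vnorm2 d (nablap n q (ext n deta) k)) 1 (n - Nat.div2 q)).
  - apply rc_sub; try lia. intros; apply Rmult_le_pos; [apply s_nonneg; auto|apply vn_nonneg].
  - apply rc_le. intros. assert (0 <= s n (S q) k) by (apply s_nonneg; auto).
    assert (0 <= vnorm2 d (nablap n (S q) (ext n eta) k)) by apply vn_nonneg. nra. Qed.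

Theorem lemma4p7 (d i j : nat) (hi : (1 <= i)%nat) (hj : (j < i)%nat) :
  exists C : R, forall (n : nat) (eta deta : seqv),
    (1 <= n)%nat ->
    (forall c, eta (n + 1)%nat c = 0) ->
    (forall c, deta (n + 1)%nat c = 0) ->
    snorm2 n d (s n (i - j)) i eta <= C * energy n d (i + j - 1) eta deta /\
    snorm2 n d (s n (i - j)) i deta <= C * energy n d (i + j) eta deta /\
    snorminf2 n d (s n (i - j)) i eta <= C * energy n d (i + j) eta deta /\
    snorminf2 n d (s n (i - j)) i deta <= C * energy n d (i + j + 1) eta deta /\
    snorminf2 n d (s_half n) i deta <= C * energy n d (2 * i + 1) eta deta.
Proof.
  destruct (chain j i (i - j) hi ltac:(lia)) as [C1 [HC1 H1]].
  destruct (chain (S j) i (i - j - 1) hi ltac:(lia)) as [C2 [HC2 H2]].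
  destruct (chain j (S i) (S (S (i - j - 1))) ltac:(lia) ltac:(lia)) as [C3 [HC3 H3]].
  destruct (chain i (S i) 1 ltac:(lia) ltac:(lia)) as [C4 [HC4 H4]].
  destruct (SI i (i - j - 1) hi) as [C5 [HC5 H5]].
  destruct (SH i hi) as [C6 [HC6 H6]].
  set (CI := C5 * (1 + C2 + C3 + 1)).
  set (CH := C6 * (1 + C4 + 1)).
  assert (HCI : 0 <= CI) by (unfold CI; apply Rmult_le_pos; lra).
  assert (HCH : 0 <= CH) by (unfold CH; apply Rmult_le_pos; lra).
  exists (C1 + CI + CH). intros n eta deta Hn _ _.
  assert (Hij : (i - j = S (i - j - 1))%nat) by lia.
  assert (SUP : forall F M, (forall q, (1 <= q <= i + j + 1)%nat -> Q n d F q q <= energy n d M eta deta) ->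
     rmax_cnt (fun k => s n (i - j) k * vnorm2 d (nablap n i F k)) 1 (n + 1 - i) <= CI * energy n d M eta deta).
  { intros F M HF. rewrite Hij. eapply Rle_trans; [apply H5; auto|]. unfold CI. rewrite Rmult_assoc.
    apply Rmult_le_compat_l; auto.
    assert (A1 := HF i ltac:(lia)). assert (A4 := HF (S i) ltac:(lia)).
    assert (A2 : Q n d F i (i - j - 1) <= C2 * energy n d M eta deta).
    { apply H2; auto. intros u Hu. apply HF. lia. }
    assert (A3 : Q n d F (S i) (S (S (i - j - 1))) <= C3 * energy n d M eta deta).
    { apply H3; auto. intros u Hu. apply HF. lia. }
    lra. }
  assert (G := fun M => energy_nonneg n d M eta deta Hn).
  split; [|split; [|split; [|split]]].
  - rewrite snorm_Q. eapply Rle_trans.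
    + apply (H1 n d (ext n eta) (energy n d (i + j - 1) eta deta) Hn).
      intros u Hu. apply E_eta; auto; lia.
    + apply Rmult_le_compat_r; [apply G|lra].
  - rewrite snorm_Q. eapply Rle_trans.
    + apply (H1 n d (ext n deta) (energy n d (i + j) eta deta) Hn).
      intros u Hu. apply E_deta; auto; lia.
    + apply Rmult_le_compat_r; [apply G|lra].
  - rewrite snorminf_eq. eapply Rle_trans.
    + apply (SUP _ (i + j)%nat). intros q Hq. apply E_eta; auto; lia.
    + apply Rmult_le_compat_r; [apply G|lra].
  - rewrite snorminf_eq. eapply Rle_trans.
    + apply (SUP _ (i + j + 1)%nat). intros q Hq. apply E_deta; auto; lia.
    + apply Rmult_le_compat_r; [apply G|lra].
  - rewrite snorminf_eq. eapply Rle_trans; [apply H6; auto|].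
    set (e := energy n d (2 * i + 1) eta deta).
    assert (A1 : Q n d (ext n deta) i i <= e) by (apply E_deta; auto; lia).
    assert (A3 : Q n d (ext n deta) (S i) (S i) <= e) by (apply E_deta; auto; lia).
    assert (A2 : Q n d (ext n deta) (S i) 1 <= C4 * e).
    { apply H4; auto. intros u Hu. apply E_deta; auto; lia. }
    assert (0 <= e) by apply G.
    apply Rle_trans with (CH * e).
    + unfold CH. rewrite Rmult_assoc. apply Rmult_le_compat_l; auto. lra.
    + apply Rmult_le_compat_r; auto; lra.
Qed.
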